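(* Let $D$ be a linear differential operator of second order that is elliptic at ${\bf z}$, and let ${\bf X}=\{{\bf x}_1,\dots,{\bf x}_N\}$ with ${\bf x}_1={\bf z}$. Then there is no positive numerical differentiation formula $Df({\bf z})\approx\sum_{j=1}^Nw_jf({\bf x}_j)$ that is exact of order $q$ for any $q\ge5$.
   Context: $\Pi^d_q$: real polynomials in $d$ variables of total degree $<q$. $Df=\sum_{|\alpha|\le2}c_\alpha\partial^\alpha f$ with real coefficient functions; $D$ is elliptic at ${\bf z}$ if $\sum_{|\alpha|=2}c_\alpha({\bf z})\xi^\alpha>0$ for all $\xi\in\mathbb{R}^d\setminus\{0\}$. ${\bf X}$ consists of distinct points. A formula with ${\bf x}_1={\bf z}$ is positive if $w_1<0$ and $w_j>0$ for $j=2,\dots,N$. It is exact of order $q$ if $Dp({\bf z})=\sum_jw_jp({\bf x}_j)$ for all $p\in\Pi^d_q$. *)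

(* Defs.v *)
From HB Require Import structures.
From mathcomp Require Import all_boot all_order all_algebra.
Set Implicit Arguments. Unset Strict Implicit. Unset Printing Implicit Defensive.
Import Order.TTheory GRing.Theory Num.Theory.
Local Open Scope ring_scope.

(* Points of R^d are row vectors 'rV[R]_d.
   Multi-indices alpha are finite functions 'I_d -> 'I_k (coerced to nat);
   |alpha| = mdeg alpha. *)
Definition mdeg (d k : nat) (a : {ffun 'I_d -> 'I_k}) : nat := (\sum_(i < d) a i)%N.

Definition mono (R : pzRingType) (d k : nat) (a : {ffun 'I_d -> 'I_k}) (x : 'rV[R]_d) : R :=
  \prod_(i < d) x ord0 i ^+ a i.

(* A real polynomial in d variables of total degree < q, given by its
   coefficients c alpha on monomials x^alpha (alpha_i < q). *)
Definition inPi (R : pzRingType) (d q : nat) (c : {ffun 'I_d -> 'I_q} -> R) : Prop :=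
  forall a, (q <= mdeg a)%N -> c a = 0.

Definition peval (R : pzRingType) (d q : nat) (c : {ffun 'I_d -> 'I_q} -> R) (x : 'rV[R]_d) : R :=
  \sum_a c a * mono a x.

(* Partial derivative d^beta p evaluated at x, beta a multi-index:
   d^beta x^alpha = prod_i alpha_i (alpha_i-1)...(alpha_i-beta_i+1) x_i^(alpha_i-beta_i)
   (the falling factorial n ^_ m is 0 when m > n). *)
Definition pderiv (R : pzRingType) (d q k : nat) (b : {ffun 'I_d -> 'I_k})
    (c : {ffun 'I_d -> 'I_q} -> R) (x : 'rV[R]_d) : R :=
  \sum_a c a * \prod_(i < d) (((a i) ^_ (b i))%:R * x ord0 i ^+ (a i - b i)).

Definition Dop (R : pzRingType) (d q : nat) (coef : {ffun 'I_d -> 'I_3} -> 'rV[R]_d -> R)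
    (c : {ffun 'I_d -> 'I_q} -> R) (z : 'rV[R]_d) : R :=
  \sum_(b | (mdeg b <= 2)%N) coef b z * pderiv b c z.

Definition elliptic_at (R : realFieldType) (d : nat)
    (coef : {ffun 'I_d -> 'I_3} -> 'rV[R]_d -> R) (z : 'rV[R]_d) : Prop :=
  forall xi : 'rV[R]_d, xi != 0 ->
    0 < \sum_(b | mdeg b == 2%N) coef b z * mono b xi.

(* The formula with nodes x_0 = z, x_1, ..., x_N (0-based) and weights w is positive. *)
Definition positive_formula (R : realFieldType) (N : nat) (w : 'I_N.+1 -> R) : Prop :=
  w ord0 < 0 /\ (forall j : 'I_N.+1, j != ord0 -> 0 < w j).

Definition exact_of_order (R : realFieldType) (d N : nat)
    (coef : {ffun 'I_d -> 'I_3} -> 'rV[R]_d -> R) (z : 'rV[R]_d)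
    (x : 'I_N.+1 -> 'rV[R]_d) (w : 'I_N.+1 -> R) (q : nat) : Prop :=
  forall c : {ffun 'I_d -> 'I_q} -> R, inPi c ->
    Dop coef c z = \sum_(j < N.+1) w j * peval c (x j).

(* Main.v *)
Require Import Defs.
From HB Require Import structures.
From mathcomp Require Import all_boot all_order all_algebra.
From mathcomp Require Import ring lra zify.
Import Order.TTheory GRing.Theory Num.Theory.
Local Open Scope ring_scope.
Set Implicit Arguments. Unset Strict Implicit.

Ltac natcomp := repeat match goal with
 | |- context[ binomial ?n ?k ] => let v := eval vm_compute in (binomial n k) in change (binomial n k) with v
 | |- context[ falling_factorial ?n ?k ] => let v := eval vm_compute in (falling_factorial n k) in change (falling_factorial n k) with v
 | |- context[ factorial ?n ] => let v := eval vm_compute in (factorial n) in change (factorial n) with v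
 | |- context[ subn ?n ?k ] => let v := eval vm_compute in (subn n k) in change (subn n k) with v
 end.

Definition u (R : realFieldType) (n : nat) (a : R) (k : nat) : R :=
  ('C(n,k))%:R * (-a)^+(n-k).

Lemma u_big (R : realFieldType) n (a : R) k : (n < k)%N -> u n a k = 0.
Proof. by move=> h; rewrite /u bin_small // mul0r. Qed.

Lemma sum_q_5 (R : realFieldType) q (F : nat -> R) : (5 <= q)%N ->
  (forall k, (5 <= k)%N -> F k = 0) ->
  \sum_(k < q) F k = \sum_(0 <= k < 5) F k.
Proof.
move=> hq hF; rewrite -(big_mkord xpredT F) (@big_cat_nat _ _ _ 5) //=.
have -> : \sum_(5 <= k < q) F k = 0.
  by rewrite big_nat_cond big1 // => k /andP[/andP[hk _] _]; exact: hF.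
by rewrite addr0.
Qed.

Lemma L1 (R : realFieldType) q n (a y : R) : (5 <= q)%N -> (n <= 4)%N ->
  \sum_(k < q) u n a k * y ^+ k = (y - a) ^+ n.
Proof.
move=> hq hn; rewrite (@sum_q_5 _ q (fun k => u n a k * y ^+ k) hq); last first.
  by move=> k hk; rewrite u_big ?mul0r //; exact: leq_ltn_trans hn hk.
rewrite !big_nat_recl // big_geq //.
by case: n hn => [|[|[|[|[|n]]]]] // _; rewrite /u; natcomp; ring.
Qed.

Lemma L2 (R : realFieldType) q n b (a : R) : (5 <= q)%N -> (n <= 4)%N -> (b < 3)%N ->
  \sum_(k < q) u n a k * ((k ^_ b)%:R * a ^+ (k - b)) =
  if n == b then (n`!)%:R else 0.
Proof.
move=> hq hn hb.
rewrite (@sum_q_5 _ q (fun k => u n a k * ((k ^_ b)%:R * a ^+ (k - b))) hq); last first.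
  by move=> k hk; rewrite u_big ?mul0r //; exact: leq_ltn_trans hn hk.
rewrite !big_nat_recl // big_geq //.
by case: n hn => [|[|[|[|[|n]]]]] // _; case: b hb => [|[|[|b]]] // _;
  rewrite /u /=; natcomp; ring.
Qed.

Definition S (R : realFieldType) (d q : nat) (n : 'I_d -> nat) (z : 'rV[R]_d)
  : {ffun 'I_d -> 'I_q} -> R := fun a => \prod_(m < d) u (n m) (z ord0 m) (a m).
Arguments S {R d} q n z _.

Lemma peval_S (R : realFieldType) d q (n : 'I_d -> nat) (z y : 'rV[R]_d) :
  (5 <= q)%N -> (forall m, n m <= 4)%N ->
  peval (S q n z) y = \prod_m (y ord0 m - z ord0 m) ^+ (n m).
Proof.
move=> hq hn; rewrite /peval /S /mono /=.
under eq_bigr do rewrite -big_split /=.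
rewrite -(bigA_distr_bigA (fun m (k : 'I_q) => u (n m) (z ord0 m) k * y ord0 m ^+ k)).
by apply: eq_bigr => m _; apply: L1.
Qed.

Lemma pderiv_S (R : realFieldType) d q (n : 'I_d -> nat) (z : 'rV[R]_d)
  (b : {ffun 'I_d -> 'I_3}) :
  (5 <= q)%N -> (forall m, n m <= 4)%N ->
  pderiv b (S q n z) z = \prod_m (if n m == b m then ((n m)`!)%:R else 0).
Proof.
move=> hq hn; rewrite /pderiv /S /=.
under eq_bigr do rewrite -big_split /=.
rewrite -(bigA_distr_bigA (fun m (k : 'I_q) => u (n m) (z ord0 m) k *
   ((k ^_ b m)%:R * z ord0 m ^+ (k - b m)))).
by apply: eq_bigr => m _; apply: L2 => //; apply: ltn_ord.
Qed.

Lemma inPi_S (R : realFieldType) d q (n : 'I_d -> nat) (z : 'rV[R]_d) :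
  (5 <= q)%N -> (\sum_m n m <= 4)%N -> inPi (S q n z).
Proof.
move=> hq hs a ha; rewrite /S.
case: (boolP [forall m, (a m <= n m)%N]) => [/forallP H | /forallPn [m Hm]].
  have : (mdeg a <= \sum_m n m)%N by rewrite /mdeg; apply: leq_sum => i _; exact: H.
  move: ha hq hs; lia.
by rewrite (bigD1 m) //= u_big ?mul0r // ltnNge.
Qed.

Definition e2 d (i : 'I_d) : 'I_d -> nat := fun m => if m == i then 2%N else 0%N.

Lemma sum_e2 d (i : 'I_d) : (\sum_m e2 i m = 2)%N.
Proof. by rewrite (bigD1 i) //= /e2 eqxx big1 ?addn0 // => m /negbTE ->. Qed.

Lemma e2_le d (i : 'I_d) m : (e2 i m <= 2)%N.
Proof. by rewrite /e2; case: ifP. Qed.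

Lemma prod_e2 (R : realFieldType) d (i : 'I_d) (y : 'I_d -> R) :
  \prod_m y m ^+ e2 i m = y i ^+ 2.
Proof. by rewrite (bigD1 i) //= /e2 eqxx big1 ?mulr1 // => m /negbTE ->. Qed.

Definition B2 d (i : 'I_d) : {ffun 'I_d -> 'I_3} := [ffun m => inord (e2 i m)].

Lemma B2E d (i : 'I_d) m : (B2 i m : nat) = e2 i m.
Proof. by rewrite ffunE inordK // ltnS e2_le. Qed.

Lemma mdeg_B2 d (i : 'I_d) : mdeg (B2 i) = 2%N.
Proof. by rewrite /mdeg; under eq_bigr do rewrite B2E; exact: sum_e2. Qed.

Lemma prod_if0 (R : realFieldType) d (n : 'I_d -> nat) (b : {ffun 'I_d -> 'I_3}) :
  ~~ [forall m, n m == b m] ->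
  \prod_m (if n m == b m then ((n m)`!)%:R else 0 : R) = 0.
Proof. by move/forallPn => [m Hm]; rewrite (bigD1 m) //= (negbTE Hm) mul0r. Qed.

Lemma Dop_e2 (R : realFieldType) d q (i : 'I_d) coef (z : 'rV[R]_d) :
  (5 <= q)%N -> Dop coef (S q (e2 i) z) z = coef (B2 i) z * 2.
Proof.
move=> hq; rewrite /Dop.
have hn : forall m, (e2 i m <= 4)%N by move=> m; apply: leq_trans (e2_le _ _) _.
under eq_bigr do rewrite pderiv_S //.
rewrite (bigD1 (B2 i)) ?mdeg_B2 //= [X in _ + X = _]big1 ?addr0.
  congr (_ * _); under eq_bigr do rewrite B2E eqxx.
  by rewrite (bigD1 i) //= /e2 eqxx big1 ?mulr1 // => m /negbTE ->.
move=> b /andP[_ hb]; rewrite prod_if0 ?mulr0 //.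
apply/negP => /forallP H; move/eqP: hb; apply.
by apply/ffunP => m; apply/val_inj; rewrite /= B2E (eqP (H m)).
Qed.

Lemma Dop_e4 (R : realFieldType) d q (i k : 'I_d) coef (z : 'rV[R]_d) :
  (5 <= q)%N -> Dop coef (S q (fun m => e2 i m + e2 k m)%N z) z = 0.
Proof.
move=> hq; rewrite /Dop.
have hn : forall m, (e2 i m + e2 k m <= 4)%N.
  by move=> m; have := e2_le i m; have := e2_le k m; lia.
under eq_bigr do rewrite pderiv_S //.
apply: big1 => b hb; rewrite prod_if0 ?mulr0 //.
apply/negP => /forallP H.
have : mdeg b = 4%N.
  rewrite /mdeg; under eq_bigr => m _ do rewrite -(eqP (H m)).
  by rewrite big_split /= !sum_e2.
by move=> h; rewrite h in hb.
Qed.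

Lemma coef_pos (R : realFieldType) d coef (z : 'rV[R]_d) (i : 'I_d) :
  elliptic_at coef z -> 0 < coef (B2 i) z.
Proof.
move=> hell.
pose xi : 'rV[R]_d := delta_mx ord0 i.
have hxi : xi != 0.
  apply/eqP => h; have := congr1 (fun M : 'rV[R]_d => M ord0 i) h.
  by rewrite /xi !mxE !eqxx /= => /eqP; rewrite oner_eq0.
have := hell xi hxi.
rewrite (bigD1 (B2 i)) ?mdeg_B2 //= big1 ?addr0.
  rewrite /mono; under eq_bigr do rewrite B2E.
  by rewrite (prod_e2 i (fun m => xi ord0 m)) /xi mxE !eqxx expr1n mulr1.
move=> b /andP[hb2 hb].
case: (boolP [forall m, (m != i) ==> (b m == 0%N :> nat)]) => [/forallP H | /forallPn [m]].
  exfalso; move/eqP: hb; apply.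
  have hbi : (b i = 2%N :> nat).
    move/eqP: hb2; rewrite /mdeg (bigD1 i) //= big1 ?addn0 // => m hm.
    by apply/eqP; move/implyP: (H m); apply.
  apply/ffunP => m; apply/val_inj; rewrite /= B2E /e2.
  case: eqP => [->|/eqP hm] //.
  by apply/eqP; move/implyP: (H m); apply.
rewrite negb_imply => /andP[hmi hbm].
by rewrite /mono (bigD1 m) //= /xi mxE (negbTE hmi) andbF expr0n (negbTE hbm) mul0r mulr0.
Qed.

Theorem mainTheorem13 (R : realFieldType) (d N : nat) (hd : (0 < d)%N)
    (coef : {ffun 'I_d -> 'I_3} -> 'rV[R]_d -> R) (z : 'rV[R]_d)
    (x : 'I_N.+1 -> 'rV[R]_d) (hinj : injective x) (hx0 : x ord0 = z)
    (hell : elliptic_at coef z) :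
  forall (w : 'I_N.+1 -> R) (q : nat), (5 <= q)%N ->
    ~ (positive_formula w /\ exact_of_order coef z x w q).
Proof.
move=> w q hq [[hw0 hwpos] hex].
pose y := fun j m => x j ord0 m - z ord0 m.
have E2 : forall i, coef (B2 i) z * 2 = \sum_j w j * (y j i) ^+ 2.
  move=> i; have := hex (S q (e2 i) z) (inPi_S z hq _); rewrite Dop_e2 // => ->;
    last by rewrite sum_e2.
  apply: eq_bigr => j _; rewrite peval_S // => [|m]; last by apply: leq_trans (e2_le _ _) _.
  by rewrite (prod_e2 i (fun m => x j ord0 m - z ord0 m)).
have E4 : forall i k, 0 = \sum_j w j * ((y j i) ^+ 2 * (y j k) ^+ 2).
  move=> i k.
  have hs4 : (\sum_m (e2 i m + e2 k m) <= 4)%N by rewrite big_split /= !sum_e2.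
  have := hex (S q (fun m => e2 i m + e2 k m)%N z) (inPi_S z hq hs4).
  rewrite Dop_e4 // => h.
  apply: (etrans h).
  apply: eq_bigr => j _; rewrite peval_S // => [|m];
    last by have := e2_le i m; have := e2_le k m; lia.
  under eq_bigr do rewrite exprD; rewrite big_split /=.
  by rewrite (prod_e2 i (fun m => x j ord0 m - z ord0 m)) (prod_e2 k (fun m => x j ord0 m - z ord0 m)).
pose r := fun j => \sum_m (y j m) ^+ 2.
have r_ge0 : forall j, 0 <= r j by move=> j; apply: sumr_ge0 => m _; apply: sqr_ge0.
have r_gt0 : forall j, j != ord0 -> 0 < r j.
  move=> j hj; rewrite lt_def r_ge0 andbT; apply/eqP => h0.
  move/eqP: hj; apply; apply: hinj; rewrite hx0; apply/rowP => m.
  have := psumr_eq0P (fun m _ => sqr_ge0 (y j m)) h0 (i:=m) isT.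
  by move/eqP; rewrite sqrf_eq0 => /eqP /subr0_eq.
have r0 : r ord0 = 0.
  by rewrite /r big1 // => m _; rewrite /y hx0 subrr expr0n.
have K1 : \sum_i (coef (B2 i) z * 2) = \sum_j w j * r j.
  rewrite (eq_bigr _ (fun i _ => E2 i)).
  rewrite exchange_big /=; apply: eq_bigr => j _; by rewrite /r mulr_sumr.
have K2 : 0 = \sum_j w j * (r j ^+ 2).
  have : \sum_i \sum_k \sum_j w j * ((y j i) ^+ 2 * (y j k) ^+ 2) = 0.
    by apply: big1 => i _; apply: big1 => k _; rewrite -E4.
  move=> h; apply: (etrans (esym h)).
  under eq_bigr do rewrite exchange_big /=.
  rewrite exchange_big /=; apply: eq_bigr => j _.
  rewrite /r expr2 mulr_suml mulr_sumr; apply: eq_bigr => i _.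
  by rewrite mulr_sumr mulr_sumr; apply: eq_bigr => k _.
pose Se := 1 + \sum_j (r j)^-1.
have Se_gt0 : 0 < Se.
  have : 0 <= \sum_j (r j)^-1 by apply: sumr_ge0 => j _; rewrite invr_ge0.
  rewrite /Se; lra.
pose eps := Se^-1.
have eps_gt0 : 0 < eps by rewrite invr_gt0.
have eps_le : forall j, j != ord0 -> eps <= r j.
  move=> j hj; have hr := r_gt0 j hj.
  rewrite /eps -[r j]invrK lef_pV2 ?posrE ?invr_gt0 //.
  rewrite /Se (bigD1 j) //=.
  have : 0 <= \sum_(i | i != j) (r i)^-1 by apply: sumr_ge0 => i _; rewrite invr_ge0.
  lra.
have Ls_gt0 : 0 < \sum_i (coef (B2 i) z * 2).
  rewrite (bigD1 (Ordinal hd)) //=.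
  have := coef_pos (Ordinal hd) hell.
  have : 0 <= \sum_(i | i != Ordinal hd) coef (B2 i) z * 2.
    by apply: sumr_ge0 => i _; apply: mulr_ge0; [apply: ltW; apply: coef_pos|].
  lra.
have Hsum : \sum_j w j * r j * (eps - r j) = eps * \sum_i (coef (B2 i) z * 2).
  rewrite K1 mulr_sumr.
  have -> : \sum_j eps * (w j * r j) =
     \sum_j eps * (w j * r j) - \sum_j w j * (r j ^+ 2) by rewrite -K2 subr0.
  rewrite -sumrB; apply: eq_bigr => j _; ring.
have Hle : \sum_j w j * r j * (eps - r j) <= 0.
  apply: sumr_le0 => j _; case: (eqVneq j ord0) => [->|hj].
    by rewrite r0 mulr0 mul0r.
  apply: mulr_ge0_le0; first by apply: mulr_ge0; apply: ltW; [apply: hwpos|apply: r_gt0].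
  by have := eps_le j hj; lra.
have := mulr_gt0 eps_gt0 Ls_gt0; rewrite -Hsum => h.
by have := lt_le_trans h Hle; rewrite ltxx.
Qed.
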